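(* For the uniform-cost inverse fractional knapsack problem under the $l_\infty$-norm (defined in the context), if it has an optimal solution, then there exists an optimal solution $(u,v,\lambda,\mu)$ with $v_i=0$ for all $i\in I^1$ and $u_i=\mu_i=0$ for all $i\in I^0$; i.e., profits of items in $I^1$ are only increased, profits of items in $I^0$ are only reduced, and costs of items in $I^0$ are only increased.
   Context: The fractional knapsack problem with profits $q_i$, costs $d_i$ and budget $b$ is $\max\{\sum_i q_ix_i:\sum_i d_ix_i\le b,\ 0\le x_i\le 1\}$. Given positive integers $p_i,c_i$ ($i=1,\dots,n$), a budget $b$, a vector $x^*\in\{0,1\}^n$, $I^1=\{i:x^*_i=1\}$, $I^0=\{i:x^*_i=0\}$, and nonnegative integer bounds $\bar u_i,\bar v_i,\bar\lambda_i,\bar\mu_i$. A feasible modification is $(u,v,\lambda,\mu)$ with $u_i\in[0,\bar u_i]\cap\mathbb Z$, $v_i\in[0,\bar v_i]\cap\mathbb Z$, $\lambda_i\in[0,\bar\lambda_i]\cap\mathbb Z$, $\mu_i\in[0,\bar\mu_i]\cap\mathbb Z$, giving $\tilde p_i=p_i+u_i-v_i$, $\tilde c_i=c_i+\lambda_i-\mu_i$. The problem asks for a feasible modification such that $x^*$ is an optimal solution of the fractional knapsack problem with profits $\tilde p_i$, costs $\tilde c_i$ and budget $b$, minimizing $\max_{1\le i\le n}\max\{u_i,v_i,\lambda_i,\mu_i\}$. *)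

(* Defs.v *)
From HB Require Import structures.
From mathcomp Require Import all_boot all_order all_algebra.
Set Implicit Arguments. Unset Strict Implicit. Unset Printing Implicit Defensive.
Import Order.TTheory GRing.Theory Num.Theory.
Local Open Scope ring_scope.

Section FK.
Variables (R : realFieldType) (n : nat).

Definition fk_feasible (d : 'I_n -> R) (b : R) (x : 'I_n -> R) : Prop :=
  (forall i, 0 <= x i <= 1) /\ \sum_(i < n) d i * x i <= b.

Definition fk_optimal (q d : 'I_n -> R) (b : R) (x : 'I_n -> R) : Prop :=
  fk_feasible d b x /\
  forall y, fk_feasible d b y -> \sum_(i < n) q i * y i <= \sum_(i < n) q i * x i.

Definition bvec (xs : 'I_n -> bool) : 'I_n -> R := fun i => (xs i)%:R.

Definition mod_profit (p : 'I_n -> nat) (u v : 'I_n -> nat) : 'I_n -> R :=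
  fun i => (p i)%:R + (u i)%:R - (v i)%:R.
Definition mod_cost (c : 'I_n -> nat) (l m : 'I_n -> nat) : 'I_n -> R :=
  fun i => (c i)%:R + (l i)%:R - (m i)%:R.

Definition feasible_mod (p c : 'I_n -> nat) (b : R) (xs : 'I_n -> bool)
  (ub vb lb mb : 'I_n -> nat) (u v l m : 'I_n -> nat) : Prop :=
  (forall i, (u i <= ub i)%N /\ (v i <= vb i)%N /\ (l i <= lb i)%N /\ (m i <= mb i)%N)
  /\ fk_optimal (mod_profit p u v) (mod_cost c l m) b (bvec xs).

Definition linf_obj (u v l m : 'I_n -> nat) : nat :=
  \max_(i < n) maxn (maxn (u i) (v i)) (maxn (l i) (m i)).

Definition optimal_mod (p c : 'I_n -> nat) (b : R) (xs : 'I_n -> bool)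
  (ub vb lb mb : 'I_n -> nat) (u v l m : 'I_n -> nat) : Prop :=
  feasible_mod p c b xs ub vb lb mb u v l m /\
  forall u' v' l' m', feasible_mod p c b xs ub vb lb mb u' v' l' m' ->
    (linf_obj u v l m <= linf_obj u' v' l' m')%N.

End FK.

(* Main.v *)
Require Import Defs.
From mathcomp Require Import all_boot all_order all_algebra.
From mathcomp Require Import zify ring lra.
Import Order.TTheory GRing.Theory Num.Theory.
Local Open Scope ring_scope.

Theorem mainTheorem5 (R : realFieldType) (n : nat)
  (p c : 'I_n -> nat) (b : nat) (xs : 'I_n -> bool)
  (ub vb lb mb : 'I_n -> nat) :
  (forall i, (0 < p i)%N) -> (forall i, (0 < c i)%N) ->
  (exists u v l m, @optimal_mod R n p c b%:R xs ub vb lb mb u v l m) ->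
  exists u v l m, @optimal_mod R n p c b%:R xs ub vb lb mb u v l m /\
    (forall i, xs i -> v i = 0%N) /\
    (forall i, ~~ xs i -> u i = 0%N /\ m i = 0%N).
Proof.
move=> _ _ [u [v [l [m [[Hb [[Hxf Hxs] Hopt]] Hmin]]]]].
pose u' i := if xs i then u i else 0%N.
pose v' i := if xs i then 0%N else v i.
pose m' i := if xs i then m i else 0%N.
have Hobj : (linf_obj u' v' l m' <= linf_obj u v l m)%N.
  rewrite /linf_obj; apply/bigmax_leqP => i _.
  apply: leq_trans (leq_bigmax i).
  rewrite /u' /v' /m'; case: (xs i); lia.
exists u', v', l, m'; split; last first.
  by split=> i; rewrite /u' /v' /m'; [move=> -> | move/negbTE ->].
split.
  split.
    move=> i; have := Hb i; rewrite /u' /v' /m'; case: (xs i); lia.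
  have Hcost : forall i, mod_cost R c l m' i * bvec R xs i = mod_cost R c l m i * bvec R xs i.
    by move=> i; rewrite /mod_cost /bvec /m'; case: (xs i); rewrite ?mulr0 ?mulr1.
  split.
    split; first exact: Hxf.
    by under eq_bigr do rewrite Hcost.
  move=> y [Hy Hyb].
  have Hyo : \sum_(i < n) mod_profit R p u v i * y i <=
             \sum_(i < n) mod_profit R p u v i * bvec R xs i.
    apply: Hopt; split => //; apply: le_trans Hyb.
    apply: ler_sum => i _; have /andP [y0 y1] := Hy i.
    rewrite /mod_cost /m'; case: (xs i) => //.
    have : (0 : R) <= (m i)%:R by [].
    nra.
  rewrite -subr_ge0; rewrite -subr_ge0 in Hyo.
  apply: le_trans Hyo _; rewrite -!sumrB; apply: ler_sum => i _.
  have /andP [y0 y1] := Hy i.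
  rewrite /mod_profit /bvec /u' /v'; case: (xs i).
    have : (0 : R) <= (v i)%:R by [].
    rewrite /=; nra.
  have : (0 : R) <= (u i)%:R by [].
  rewrite /=; nra.
move=> u2 v2 l2 m2 H2; apply: leq_trans Hobj _; exact: Hmin.
Qed.
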